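(* Let $f,f_0\in\mathcal F$. Let $g$ and $\bar g_0$ be densities on $\mathcal X$, and let $g_0$ be a density on $\mathcal X$ such that $\eta\bar g_0(x)\ge g_0(x)$ for some constant $\eta>0$ and all $x\in\mathcal X$. Then $$d_h^2(f_0,f)\le4\eta\int\Big(\sqrt{f_0(y|x)\bar g_0(x)}-\sqrt{f(y|x)g(x)}\Big)^2\,dy\,dx.$$
   Context: $\mathcal Y\subset\mathbb R^{d_y}$ and $\mathcal X\subset\mathbb R^{d_x}$. $\mathcal F$ is the set of Borel measurable $f:\mathcal Y\times\mathcal X\to[0,\infty)$ with $\int f(y|x)\,dy=1$ for every $x$. For $f_1,f_2\in\mathcal F$, $d_h(f_1,f_2)=\big(\int(\sqrt{f_1(y|x)}-\sqrt{f_2(y|x)})^2g_0(x)\,dy\,dx\big)^{1/2}$. All densities are with respect to Lebesgue measure. *)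

(* Defs.v *)
(* R^d is modelled as d.-tuple R,
   equipped with the library's product (= Borel) sigma-algebra. *)
From mathcomp Require Import all_boot all_order all_algebra.
From mathcomp Require Import all_classical all_reals all_analysis.
Set Implicit Arguments. Unset Strict Implicit. Unset Printing Implicit Defensive.
Import Order.TTheory GRing.Theory Num.Theory.
Local Open Scope classical_set_scope.
Local Open Scope ring_scope.

(* mu is Lebesgue measure on R^d (on the Borel sets): it assigns to every
   closed box  prod_i [a_i, b_i]  its volume  prod_i (b_i - a_i).
   This determines mu uniquely (pi-lambda theorem). *)
Definition is_lebesgue_measure {R : realType} (d : nat)
    (mu : {measure set (d.-tuple R) -> \bar R}) : Prop :=
  forall a b : d.-tuple R, (forall i, tnth a i <= tnth b i) ->
    mu [set t | forall i, tnth a i <= tnth t i <= tnth b i] =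
      (\prod_(i < d) (tnth b i - tnth a i))%:E.

(* f belongs to the class F of conditional densities f(y|x) on Y x X
   (f y x stands for f(y|x)). *)
Definition cond_density {R : realType} (dy dx : nat)
    (muy : {measure set (dy.-tuple R) -> \bar R})
    (Y : set (dy.-tuple R)) (X : set (dx.-tuple R))
    (f : dy.-tuple R -> dx.-tuple R -> R) : Prop :=
  [/\ measurable_fun (Y `*` X) (fun p => f p.1 p.2),
      (forall y x, Y y -> X x -> 0 <= f y x) &
      (forall x, X x -> (\int[muy]_(y in Y) (f y x)%:E = 1)%E)].

Definition density_on {R : realType} (dx : nat)
    (mux : {measure set (dx.-tuple R) -> \bar R})
    (X : set (dx.-tuple R)) (g : dx.-tuple R -> R) : Prop :=
  [/\ measurable_fun X g,
      (forall x, X x -> 0 <= g x) &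
      (\int[mux]_(x in X) (g x)%:E = 1)%E].

Definition hellinger_sq {R : realType} (dy dx : nat)
    (muy : {measure set (dy.-tuple R) -> \bar R})
    (mux : {measure set (dx.-tuple R) -> \bar R})
    (Y : set (dy.-tuple R)) (X : set (dx.-tuple R))
    (g0 : dx.-tuple R -> R) (f1 f2 : dy.-tuple R -> dx.-tuple R -> R)
    : \bar R :=
  (\int[mux]_(x in X) \int[muy]_(y in Y)
     (((Num.sqrt (f1 y x) - Num.sqrt (f2 y x)) ^+ 2 * g0 x)%:E))%E.

(* Main.v *)
Require Import Defs.
From mathcomp Require Import all_boot all_order all_algebra.
From mathcomp Require Import all_classical all_reals all_analysis.
From mathcomp Require Import measurable_realfun realfun.
From mathcomp Require Import ring lra.
Import Order.TTheory GRing.Theory Num.Theory.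
Local Open Scope classical_set_scope.
Local Open Scope ring_scope.
Import HBNNSimple.
Section S.
Context d (T : measurableType d) (R : realType) (mu : {measure set T -> \bar R}).
Local Open Scope ereal_scope.
Lemma int_mono_nm (D : set T) (f1 f2 : T -> \bar R) :
  (forall x, D x -> 0 <= f1 x) -> (forall x, D x -> f1 x <= f2 x) ->
  \int[mu]_(x in D) f1 x <= \int[mu]_(x in D) f2 x.
Proof.
move=> h0 h12.
rewrite !ge0_integralE //; last by move=> x Dx; apply: le_trans (h0 x Dx) (h12 x Dx).
apply: ereal_sup_le => _ [h /= hle <-]; exists h => //= x.
apply: le_trans (hle x) _; rewrite /patch; case: ifP => // /[!inE] Dx; exact: h12.
Qed.
Lemma int_scale_nm (D : set T) (f : T -> \bar R) (c : R) : (0 < c)%R ->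
  (forall x, D x -> 0 <= f x) ->
  \int[mu]_(x in D) (c%:E * f x) <= c%:E * \int[mu]_(x in D) f x.
Proof.
move=> c0 f0.
have cf0 : forall x, D x -> 0 <= c%:E * f x.
  by move=> x Dx; apply: mule_ge0; [rewrite lee_fin ltW | exact: f0].
rewrite (ge0_integralE _ cf0) (ge0_integralE _ f0).
apply: ub_ereal_sup => _ [h /= hle <-].
have ic0 : (0 <= c^-1)%R by rewrite invr_ge0 ltW.
pose h' := scale_nnsfun h ic0.
have -> : sintegral mu h = c%:E * sintegral mu h'.
  have -> : sintegral mu h' = c^-1%:E * sintegral mu h by exact: sintegralrM.
  by rewrite muleA -EFinM mulfV ?gt_eqF // mul1e.
Search (_%:E * _ <= _%:E * _)%E.
apply: lee_wpmul2l; first by rewrite lee_fin ltW.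
apply: ereal_sup_ubound; exists h' => //= x.
rewrite /h' /= /patch; case: ifPn => [/[!inE] Dx|nDx].
  have := hle x; rewrite /patch ifT ?inE //.
  move: (f0 x Dx); case: (f x) => [r||] //= r0.
    rewrite !lee_fin => hr; rewrite ler_pdivrMl //.
  by rewrite leey.
have := hle x; rewrite /patch ifN ?inE //.
  have -> : (point : \bar R) = 0 by [].
  rewrite !lee_fin => hx; rewrite mulr_ge0_le0 // invr_ge0 ltW //.
Qed.

Lemma measP (D : set T) (p : T -> R) : measurable_fun D p ->
  measurable_fun D (fun y => Num.sqrt (p y)).
Proof.
move=> mp; exact: (measurableT_comp (continuous_measurable_fun (@sqrt_continuous R)) mp).
Qed.

Lemma int_comb (Y : set T) (mY : measurable Y) (p q : T -> R) (al be : R) :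
  measurable_fun Y p -> measurable_fun Y q ->
  (forall y, Y y -> (0 <= p y)%R) -> (forall y, Y y -> (0 <= q y)%R) ->
  \int[mu]_(y in Y) (p y)%:E = 1 -> \int[mu]_(y in Y) (q y)%:E = 1 ->
  (0 <= al)%R -> (0 <= be)%R ->
  \int[mu]_(y in Y) ((al * p y + be * q y)%R)%:E = (al + be)%:E.
Proof.
move=> mp mq p0 q0 ip iq a0 b0.
under eq_integral do rewrite EFinD.
rewrite ge0_integralD //; last 4 first.
- by move=> y Yy; rewrite lee_fin mulr_ge0 // p0.
- by apply/measurable_EFinP; apply: measurable_funM => //; exact: measurable_cst.
- by move=> y Yy; rewrite lee_fin mulr_ge0 // q0.
- by apply/measurable_EFinP; apply: measurable_funM => //; exact: measurable_cst.
under eq_integral do rewrite EFinM.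
rewrite (ge0_integralZl_EFin _ mY (f1 := fun y => (p y)%:E)); last 3 first.
- by move=> y Yy; rewrite lee_fin p0.
- exact/measurable_EFinP.
- exact: a0.
rewrite (ge0_integralZl_EFin _ mY (f1 := fun y => (q y)%:E)); last 3 first.
- by move=> y Yy; rewrite lee_fin q0.
- exact/measurable_EFinP.
- exact: b0.
by rewrite ip iq !mule1.
Qed.
End S.

Lemma key0 (R : realType) (u v s t : R) : 0 <= u -> 0 <= v -> 0 <= s -> 0 <= t ->
  (u - v) ^+ 2 * s ^+ 2 + (2 * s ^+ 2 * u ^+ 2 + 2 * t ^+ 2 * v ^+ 2)
  <= 4 * (u * s - v * t) ^+ 2 + (2 * s ^+ 2 * v ^+ 2 + 2 * t ^+ 2 * u ^+ 2).
Proof.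
move=> u0 v0 s0 t0.
have H : 0 <= (s ^+ 2 + 2 * t ^+ 2) * (u - v) ^+ 2 + 4 * (u * v) * (s - t) ^+ 2.
  by apply: addr_ge0; apply: mulr_ge0; rewrite ?sqr_ge0 ?addr_ge0 ?mulr_ge0 ?sqr_ge0.
rewrite -subr_ge0; apply: (le_trans H); rewrite le_eqVlt; apply/orP; left; apply/eqP.
by ring.
Qed.

Lemma key (R : realType) (p q a b : R) : 0 <= p -> 0 <= q -> 0 <= a -> 0 <= b ->
  (Num.sqrt p - Num.sqrt q) ^+ 2 * a + (2 * a * p + 2 * b * q)
  <= 4 * (Num.sqrt (p * a) - Num.sqrt (q * b)) ^+ 2 + (2 * a * q + 2 * b * p).
Proof.
move=> p0 q0 a0 b0.
rewrite !sqrtrM //.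
have := @key0 R _ _ _ _ (sqrtr_ge0 p) (sqrtr_ge0 q) (sqrtr_ge0 a) (sqrtr_ge0 b).
by rewrite !sqr_sqrtr.
Qed.

Section T2.
Context d (T : measurableType d) (R : realType) (mu : {measure set T -> \bar R}).
Local Open Scope ereal_scope.

Lemma int_split (Y : set T) (mY : measurable Y) (k m : T -> R) :
  measurable_fun Y k -> measurable_fun Y m ->
  (forall y, Y y -> (0 <= k y)%R) -> (forall y, Y y -> (0 <= m y)%R) ->
  \int[mu]_(y in Y) ((k y + m y)%R)%:E =
  \int[mu]_(y in Y) (k y)%:E + \int[mu]_(y in Y) (m y)%:E.
Proof.
move=> mk mm k0 m0; under eq_integral do rewrite EFinD.
have k0' : forall y, Y y -> 0 <= (k y)%:E by move=> y Yy; rewrite lee_fin k0.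
have m0' : forall y, Y y -> 0 <= (m y)%:E by move=> y Yy; rewrite lee_fin m0.
have mk' : measurable_fun Y (fun y => (k y)%:E) by exact/measurable_EFinP.
have mm' : measurable_fun Y (fun y => (m y)%:E) by exact/measurable_EFinP.
exact: (ge0_integralD _ mY k0' mk' m0' mm').
Qed.

Lemma inner (Y : set T) (mY : measurable Y) (p q : T -> R) (a b c eta : R) :
  measurable_fun Y p -> measurable_fun Y q ->
  (forall y, Y y -> (0 <= p y)%R) -> (forall y, Y y -> (0 <= q y)%R) ->
  \int[mu]_(y in Y) (p y)%:E = 1 -> \int[mu]_(y in Y) (q y)%:E = 1 ->
  (0 <= a)%R -> (0 <= b)%R -> (0 <= c)%R -> (0 < eta)%R -> (c <= eta * a)%R ->
  \int[mu]_(y in Y) (((Num.sqrt (p y) - Num.sqrt (q y)) ^+ 2 * c)%R)%:E <=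
  (4 * eta)%:E * \int[mu]_(y in Y) (((Num.sqrt (p y * a) - Num.sqrt (q y * b)) ^+ 2)%R)%:E.
Proof.
move=> mp mq p0 q0 ip iq a0 b0 c0 eta0 hc.
pose K := fun y => ((Num.sqrt (p y) - Num.sqrt (q y)) ^+ 2 * a)%R.
pose L := fun y => ((Num.sqrt (p y * a) - Num.sqrt (q y * b)) ^+ 2)%R.
have mK : measurable_fun Y K.
  apply: measurable_funM; last exact: measurable_cst.
  by apply: measurable_funX; apply: measurable_funB; apply: measP.
have mL : measurable_fun Y L.
  apply: measurable_funX; apply: measurable_funB; apply: measP;
    by apply: measurable_funM => //; exact: measurable_cst.
have K0 y : (0 <= K y)%R by rewrite mulr_ge0 // sqr_ge0.
have L0 y : (0 <= L y)%R by rewrite sqr_ge0.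
apply: (@le_trans _ _ (\int[mu]_(y in Y) (eta%:E * (K y)%:E))).
  apply: int_mono_nm => y Yy; first by rewrite lee_fin mulr_ge0 // sqr_ge0.
  rewrite -EFinM lee_fin /K mulrCA; apply: ler_wpM2l => //; exact: sqr_ge0.
apply: (le_trans (@int_scale_nm _ _ _ mu Y (fun y => (K y)%:E) eta eta0 _)); first by move=> y _; rewrite lee_fin.
rewrite (mulrC 4%R eta) EFinM -muleA; apply: lee_wpmul2l; first by rewrite lee_fin ltW.
have -> : 4%:E * \int[mu]_(y in Y) (L y)%:E = \int[mu]_(y in Y) ((4 * L y)%R)%:E.
  under [in RHS]eq_integral do rewrite EFinM.
  rewrite (ge0_integralZl_EFin _ mY (f1 := fun y => (L y)%:E)) //.
  - by move=> y _; rewrite lee_fin.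
  - exact/measurable_EFinP.
have H : \int[mu]_(y in Y) ((K y + (2 * a * p y + 2 * b * q y))%R)%:E <=
         \int[mu]_(y in Y) ((4 * L y + (2 * a * q y + 2 * b * p y))%R)%:E.
  apply: int_mono_nm => y Yy.
    by rewrite lee_fin addr_ge0 // addr_ge0 // !mulr_ge0 // ?p0 ?q0.
  by rewrite lee_fin; apply: key => //; [exact: p0 | exact: q0].
have mM : forall (u v : T -> R), measurable_fun Y u -> measurable_fun Y v ->
    measurable_fun Y (fun y => (2 * a * u y + 2 * b * v y)%R).
  move=> u v mu' mv; apply: measurable_funD; apply: measurable_funM => //;
    exact: measurable_cst.
have M0 : forall (u v : T -> R), (forall y, Y y -> (0 <= u y)%R) ->
    (forall y, Y y -> (0 <= v y)%R) ->
    forall y, Y y -> (0 <= 2 * a * u y + 2 * b * v y)%R.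
  by move=> u v u0 v0 y Yy; rewrite addr_ge0 // mulr_ge0 // ?mulr_ge0 // ?u0 ?v0.
move: H; rewrite int_split //; last 2 first.
- exact: (mM p q mp mq).
- exact: (M0 p q p0 q0).
rewrite [X in _ <= X]int_split //; last 4 first.
- exact: (measurable_funM (measurable_cst (4%R : R)) mL).
- exact: (mM q p mq mp).
- by move=> y _; rewrite mulr_ge0.
- exact: (M0 q p q0 p0).
have a2 : (0 <= 2 * a)%R by rewrite mulr_ge0.
have b2 : (0 <= 2 * b)%R by rewrite mulr_ge0.
rewrite (@int_comb _ _ _ mu Y mY p q (2 * a) (2 * b) mp mq p0 q0 ip iq a2 b2).
rewrite (@int_comb _ _ _ mu Y mY q p (2 * a) (2 * b) mq mp q0 p0 iq ip a2 b2).
by rewrite leeD2rE.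
Qed.
End T2.

Lemma sec_meas (R : realType) (dy dx : nat) (Y : set (dy.-tuple R)) (X : set (dx.-tuple R))
  (F : dy.-tuple R -> dx.-tuple R -> R) (x : dx.-tuple R) :
  measurable Y -> measurable X -> measurable_fun (Y `*` X) (fun p => F p.1 p.2) ->
  X x -> measurable_fun Y (fun y => F y x).
Proof.
move=> mY mX mF Xx.
have := measurable_comp (measurableX mY mX) _ mF
  (measurable_funS measurableT (@subsetT _ Y) (pair2_measurable x)).
apply => _ [y Yy <-]; by split.
Qed.

Theorem corollary3 (R : realType) (dy dx : nat)
    (muy : {measure set (dy.-tuple R) -> \bar R})
    (mux : {measure set (dx.-tuple R) -> \bar R})
    (Y : set (dy.-tuple R)) (X : set (dx.-tuple R))
    (f f0 : dy.-tuple R -> dx.-tuple R -> R)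
    (g gb0 g0 : dx.-tuple R -> R) (eta : R) :
  is_lebesgue_measure muy -> is_lebesgue_measure mux ->
  measurable Y -> measurable X ->
  cond_density muy Y X f -> cond_density muy Y X f0 ->
  density_on mux X g -> density_on mux X gb0 -> density_on mux X g0 ->
  0 < eta -> (forall x, X x -> eta * gb0 x >= g0 x) ->
  (hellinger_sq muy mux Y X g0 f0 f <=
    (4 * eta)%:E * \int[mux]_(x in X) \int[muy]_(y in Y)
      (((Num.sqrt (f0 y x * gb0 x) - Num.sqrt (f y x * g x)) ^+ 2)%:E))%E.
Proof.
move=> _ _ mY mX [mf f_ge0 f_int] [mf0 f0_ge0 f0_int] [_ g_ge0 _] [_ gb_ge0 _]
  [_ g0_ge0 _] eta0 hg.
rewrite /hellinger_sq.
have e4 : (0 < 4 * eta)%R by rewrite mulr_gt0.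
apply: (le_trans _ (@int_scale_nm _ _ _ mux X (fun x => \int[muy]_(y in Y)
      (((Num.sqrt (f0 y x * gb0 x) - Num.sqrt (f y x * g x)) ^+ 2)%:E))%E (4 * eta) e4 _)); last first.
  by move=> x _; apply: integral_ge0 => y _; rewrite lee_fin sqr_ge0.
apply: int_mono_nm => x Xx.
  by apply: integral_ge0 => y Yy; rewrite lee_fin mulr_ge0 ?sqr_ge0 ?g0_ge0.
exact: (@inner _ _ _ muy Y mY (fun y => f0 y x) (fun y => f y x) (gb0 x) (g x) (g0 x) eta
  (@sec_meas _ _ _ Y X _ x mY mX mf0 Xx) (@sec_meas _ _ _ Y X _ x mY mX mf Xx)
  (fun y Yy => f0_ge0 y x Yy Xx) (fun y Yy => f_ge0 y x Yy Xx)
  (f0_int x Xx) (f_int x Xx) (gb_ge0 x Xx) (g_ge0 x Xx) (g0_ge0 x Xx) eta0 (hg x Xx)).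
Qed.
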